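(* Let $\lambda$ be an uncountable regular cardinal, and suppose $S=\langle I\times\kappa,\mathcal{R}\rangle$ is a $\lambda$-system with no cofinal branch. Suppose $\mathrm{width}(S)=\kappa'$. Then there is a $\lambda$-system $S'=\langle I\times\kappa',\mathcal{R}'\rangle$ with no cofinal branch such that $|\mathcal{R}'|=1$.
   Context: A binary relation $R$ is tree-like if whenever $a<_Rc$ and $b<_Rc$, then $a,b$ are $R$-comparable ($a=b$, $a<_Rb$ or $b<_Ra$). For a cardinal $0<\kappa<\lambda$, a $\lambda$-system $\langle I\times\kappa,\mathcal{R}\rangle$ consists of an unbounded $I\subseteq\lambda$ (levels $S_\alpha=\{\alpha\}\times\kappa$, $\alpha\in I$) and a set $\mathcal{R}$ of binary, transitive, tree-like relations on $I\times\kappa$ with $0<|\mathcal{R}|<\lambda$, such that if $(\alpha_0,\beta_0)<_R(\alpha_1,\beta_1)$ for $R\in\mathcal{R}$ then $\alpha_0<\alpha_1$, and for all $\alpha_0<\alpha_1$ in $I$ there are $\beta_0,\beta_1<\kappa$ and $R\in\mathcal{R}$ with $(\alpha_0,\beta_0)<_R(\alpha_1,\beta_1)$. $\mathrm{width}(S)=\max(\kappa,|\mathcal{R}|)$. A branch through $R\in\mathcal{R}$ is a set of pairwise $R$-comparable elements; it is cofinal if it meets $S_\alpha$ for unboundedly many $\alpha\in I$; $S$ has a cofinal branch if some $R\in\mathcal{R}$ has a cofinal branch. *)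

(* Defs.v *)
From Stdlib Require Import Classical.

Definition inj_le (A B : Type) : Prop :=
  exists f : A -> B, forall x y, f x = f y -> x = y.

Definition card_lt (A B : Type) : Prop := inj_le A B /\ ~ inj_le B A.

(* (L, lt) represents an uncountable regular cardinal lambda, viewed as the
   well-ordered set of its ordinals (von Neumann style): a strict well-order
   every proper initial segment of which has smaller cardinality, which is
   uncountable, and in which every subset of size < lambda is bounded. *)
Record uncountable_regular_cardinal (L : Type) (lt : L -> L -> Prop) : Prop := {
  urc_trans : forall x y z, lt x y -> lt y z -> lt x z;
  urc_total : forall x y, x = y \/ lt x y \/ lt y x;
  urc_wf : well_founded lt;
  urc_initial : forall a : L, ~ inj_le L {x : L | lt x a};
  urc_uncountable : ~ inj_le L nat;
  urc_regular : forall X : L -> Prop, ~ inj_le L {x : L | X x} ->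
                  exists b : L, forall x, X x -> lt x b
}.

Definition node (L : Type) (I : L -> Prop) (K : Type) : Type :=
  ({a : L | I a} * K)%type.

Definition level {L : Type} {I : L -> Prop} {K : Type} (p : node L I K) : L :=
  proj1_sig (fst p).

Definition tree_like {X : Type} (R : X -> X -> Prop) : Prop :=
  forall a b c, R a c -> R b c -> a = b \/ R a b \/ R b a.

Definition transitive_rel {X : Type} (R : X -> X -> Prop) : Prop :=
  forall a b c, R a b -> R b c -> R a c.

Definition lambda_system (L : Type) (lt : L -> L -> Prop) (I : L -> Prop)
    (K : Type) (Rs : (node L I K -> node L I K -> Prop) -> Prop) : Prop :=
  inhabited K /\ card_lt K L /\
  inhabited {R | Rs R} /\ card_lt {R | Rs R} L /\
  (forall a : L, exists b : L, I b /\ ~ lt b a) /\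
  (forall R, Rs R ->
     transitive_rel R /\ tree_like R /\
     (forall p q, R p q -> lt (level p) (level q))) /\
  (forall (a0 a1 : {a : L | I a}), lt (proj1_sig a0) (proj1_sig a1) ->
     exists (b0 b1 : K) R, Rs R /\ R (a0, b0) (a1, b1)).

Definition has_cofinal_branch (L : Type) (lt : L -> L -> Prop) (I : L -> Prop)
    (K : Type) (Rs : (node L I K -> node L I K -> Prop) -> Prop) : Prop :=
  exists R, Rs R /\
    exists B : node L I K -> Prop,
      (forall p q, B p -> B q -> p = q \/ R p q \/ R q p) /\
      (forall a : L, exists p, B p /\ ~ lt (level p) a).

Definition card_is_max (K' K Ridx : Type) : Prop :=
  inj_le K K' /\ inj_le Ridx K' /\ (inj_le K' K \/ inj_le K' Ridx).

(* Main.v *)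
Require Import Defs.
From Stdlib Require Import Classical ClassicalEpsilon List Arith Lia FinFun Wellfounded FunctionalExtensionality.

Definition Fin (X : Type) : Prop := exists l : list X, forall x, In x l.

Lemma sig_ext {A} {P : A -> Prop} (x y : sig P) : proj1_sig x = proj1_sig y -> x = y.
Proof. destruct x, y; simpl; intros; subst; f_equal; apply proof_irrelevance. Qed.

Lemma inj_refl A : inj_le A A.
Proof. exists (fun x => x); auto. Qed.

Lemma inj_trans A B C : inj_le A B -> inj_le B C -> inj_le A C.
Proof. intros [f Hf] [g Hg]. exists (fun x => g (f x)); auto. Qed.

Lemma inj_prod A A' B B' : inj_le A A' -> inj_le B B' -> inj_le (A * B) (A' * B').
Proof.
  intros [f Hf] [g Hg]. exists (fun p => (f (fst p), g (snd p))).
  intros [] [] H; simpl in H; inversion H; f_equal; auto.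
Qed.

Lemma inj_option A B : inj_le A B -> inj_le (option A) (option B).
Proof.
  intros [f Hf]. exists (fun o => match o with Some a => Some (f a) | None => None end).
  intros [] [] H; try discriminate; auto. inversion H; f_equal; auto.
Qed.

Lemma fin_inj_aux A B (f : A -> B) (Hf : forall x y, f x = f y -> x = y) (l : list B) :
  forall P : A -> Prop, (forall x, P x -> In (f x) l) -> exists l', forall x, P x -> In x l'.
Proof.
  induction l as [|y l IH]; intros P HP.
  - exists nil. intros x Hx. destruct (HP x Hx).
  - destruct (IH (fun x => P x /\ f x <> y)) as [l' Hl'].
    { intros x [Hx Hne]. destruct (HP x Hx); [congruence|auto]. }
    destruct (classic (exists x0, P x0 /\ f x0 = y)) as [[x0 [Hx0 Hy]]|Hno].
    + exists (x0 :: l'). intros x Hx. destruct (classic (f x = y)).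
      * left. apply Hf. congruence.
      * right. auto.
    + exists l'. intros x Hx. apply Hl'. split; auto. intro E; apply Hno; eauto.
Qed.

Lemma fin_inj A B : inj_le A B -> Fin B -> Fin A.
Proof.
  intros [f Hf] [l Hl]. destruct (fin_inj_aux A B f Hf l (fun _ => True)) as [l' H']; auto.
  exists l'; auto.
Qed.

Lemma nat_not_fin X : inj_le nat X -> ~ Fin X.
Proof.
  intros [f Hf] [l Hl].
  assert (H := @NoDup_incl_length X (map f (seq 0 (S (length l)))) l).
  rewrite length_map, length_seq in H.
  assert (S (length l) <= length l); [|lia].
  apply H. apply Injective_map_NoDup; [exact Hf|apply seq_NoDup].
  intros x _; auto.
Qed.

Lemma fin_option A : Fin A -> Fin (option A).
Proof. intros [l Hl]. exists (None :: map Some l). intros [a|]; simpl; auto. right; apply in_map; auto. Qed.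

Lemma fin_prod A B : Fin A -> Fin B -> Fin (A * B).
Proof. intros [l Hl] [l' Hl']. exists (list_prod l l'). intros [a b]; apply in_prod; auto. Qed.

Lemma notfin_nat X : ~ Fin X -> inj_le nat X.
Proof.
  intros HX.
  assert (inh : inhabited X).
  { destruct (classic (inhabited X)) as [|Hn]; auto. exfalso; apply HX. exists nil.
    intros x; apply Hn; constructor; auto. }
  assert (Hnew : forall l : list X, exists x, ~ In x l).
  { intros l. apply NNPP; intro Hn. apply HX. exists l. intros x. apply NNPP; intro; apply Hn; eauto. }
  set (g := fix g (n : nat) : list X := match n with 0 => nil | S n => epsilon inh (fun x => ~ In x (g n)) :: g n end).
  assert (Hg : forall n, ~ In (epsilon inh (fun x => ~ In x (g n))) (g n)).
  { intros n. apply (epsilon_spec inh (fun x => ~ In x (g n))). apply Hnew. }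
  assert (Hmono : forall n m, n <= m -> incl (g n) (g m)).
  { intros n m Hnm. induction Hnm; [apply incl_refl|]. intros x Hx; simpl; right; auto. }
  exists (fun n => epsilon inh (fun x => ~ In x (g n))).
  intros n m E. destruct (Nat.lt_trichotomy n m) as [H|[H|H]]; auto; exfalso.
  - apply (Hg m). rewrite <- E. apply (Hmono (S n) m H). simpl; auto.
  - apply (Hg n). rewrite E. apply (Hmono (S m) n H). simpl; auto.
Qed.

Lemma hotel X : ~ Fin X -> inj_le (option X) X.
Proof.
  intros HX. destruct (notfin_nat X HX) as [f Hf].
  set (h := fun o : option X => match o with
     | None => f 0
     | Some x => match excluded_middle_informative (exists n, f n = x) with
                 | left H => f (S (proj1_sig (constructive_indefinite_description _ H)))
                 | right _ => x end end).
  exists h. intros [x|] [y|]; unfold h;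
  repeat match goal with |- context [excluded_middle_informative ?P] => destruct (excluded_middle_informative P) end;
  repeat match goal with |- context [constructive_indefinite_description ?P ?H] =>
     destruct (constructive_indefinite_description P H) end; simpl; intros E.
  all: first [ reflexivity
    | (apply Hf in E; (discriminate || (injection E; intros; subst; congruence)))
    | (exfalso; match goal with n : ~ _ |- _ => apply n; eexists; eassumption end)
    | (exfalso; symmetry in E; match goal with n : ~ _ |- _ => apply n; eexists; eassumption end)
    | congruence ].
Qed.

Lemma lt_irrefl L lt (HU : uncountable_regular_cardinal L lt) x : ~ lt x x.
Proof.
  induction (urc_wf L lt HU x) as [x _ IH]. intros H. exact (IH x H H).
Qed.

Lemma lt_asym L lt (HU : uncountable_regular_cardinal L lt) x y : lt x y -> ~ lt y x.
Proof. intros H1 H2. apply (lt_irrefl L lt HU x). eapply (urc_trans _ _ HU); eauto. Qed.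

Lemma no_max L lt (HU : uncountable_regular_cardinal L lt) b : exists c, lt b c.
Proof.
  destruct (urc_regular L lt HU (fun x => x = b)) as [c Hc].
  - intros [f Hf]. apply (urc_uncountable L lt HU). exists (fun _ => 0).
    intros x y _. apply Hf. apply sig_ext. destruct (f x), (f y); simpl; congruence.
  - exists c. apply Hc. reflexivity.
Qed.

Lemma nat_L L lt (HU : uncountable_regular_cardinal L lt) (x0 : L) : inj_le nat L.
Proof.
  assert (inh : inhabited L) by (constructor; exact x0).
  set (f := fix f (n : nat) : L := match n with 0 => x0 | S n => epsilon inh (fun y => lt (f n) y) end).
  assert (Hs : forall n, lt (f n) (f (S n))).
  { intros n. simpl. apply (epsilon_spec inh (fun y => lt (f n) y)). apply (no_max L lt HU). }
  assert (Hm : forall n m, n < m -> lt (f n) (f m)).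
  { intros n m H. induction H; auto. eapply (urc_trans _ _ HU); eauto. }
  exists f. intros n m E. destruct (Nat.lt_trichotomy n m) as [H|[H|H]]; auto; exfalso;
  apply Hm in H; rewrite E in H; eapply lt_irrefl; eauto.
Qed.

Lemma L_notfin L lt (HU : uncountable_regular_cardinal L lt) : ~ Fin L.
Proof.
  intros HF. destruct (classic (exists x : L, True)) as [[x0 _]|Hn].
  - exact (nat_not_fin L (nat_L L lt HU x0) HF).
  - apply (urc_uncountable L lt HU). exists (fun _ => 0). intros x. exfalso; eauto.
Qed.

Lemma L_inh L lt (HU : uncountable_regular_cardinal L lt) : inhabited L.
Proof.
  apply NNPP; intro Hn. apply (L_notfin L lt HU). exists nil. intros x; apply Hn; constructor; auto.
Qed.

Lemma least L lt (HU : uncountable_regular_cardinal L lt) (P : L -> Prop) :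
  (exists x, P x) -> exists x, P x /\ forall y, P y -> ~ lt y x.
Proof.
  intros [x Hx]. revert Hx. induction (urc_wf L lt HU x) as [x _ IH]. intros Hx.
  destruct (classic (exists y, P y /\ lt y x)) as [[y [Hy Hyx]]|Hn].
  - eapply IH; eauto.
  - exists x. split; auto. intros y Hy Hyx. apply Hn; eauto.
Qed.

Lemma small_bounded L lt (HU : uncountable_regular_cardinal L lt) A (f : A -> L) :
  ~ inj_le L A -> exists b, forall a, lt (f a) b.
Proof.
  intros HA. destruct (urc_regular L lt HU (fun x => exists a, f a = x)) as [b Hb].
  - intros [h Hh]. apply HA.
    exists (fun x => proj1_sig (constructive_indefinite_description _ (proj2_sig (h x)))).
    intros x y E.
    destruct (constructive_indefinite_description _ (proj2_sig (h x))) as [a Ha].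
    destruct (constructive_indefinite_description _ (proj2_sig (h y))) as [a' Ha'].
    simpl in E. subst a'. apply Hh. apply sig_ext. congruence.
  - exists b. intros a. apply Hb. eauto.
Qed.

Lemma max2 L lt (HU : uncountable_regular_cardinal L lt) x y :
  exists b, (lt x b \/ x = b) /\ (lt y b \/ y = b).
Proof.
  destruct (urc_total L lt HU x y) as [E|[H|H]].
  - exists y; subst; auto.
  - exists y; auto.
  - exists x; auto.
Qed.

Lemma le_lt_trans L lt (HU : uncountable_regular_cardinal L lt) x y z :
  (lt x y \/ x = y) -> lt y z -> lt x z.
Proof. intros [H|H] H'; subst; auto. eapply (urc_trans _ _ HU); eauto. Qed.

Lemma lt_le_trans L lt (HU : uncountable_regular_cardinal L lt) x y z :
  lt x y -> (lt y z \/ y = z) -> lt x z.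
Proof. intros H [H'|H']; subst; auto. eapply (urc_trans _ _ HU); eauto. Qed.

Lemma not_lt_le L lt (HU : uncountable_regular_cardinal L lt) x y : ~ lt x y -> lt y x \/ y = x.
Proof. intros H. destruct (urc_total L lt HU x y) as [E|[H1|H1]]; auto. contradiction. Qed.

Lemma collapse L lt (HU : uncountable_regular_cardinal L lt) (P : Type) (ltP : P -> P -> Prop)
  (wfP : well_founded ltP) (trP : forall p q r, ltP p q -> ltP q r -> ltP p r)
  (smP : forall p, ~ inj_le L {q | ltP q p}) :
  exists g : P -> L, (forall p q, ltP p q -> lt (g p) (g q)) /\
    (forall p z, lt z (g p) -> exists q, ltP q p /\ g q = z).
Proof.
  pose proof (L_inh L lt HU) as inh.
  set (F := fun (p : P) (h : forall q, ltP q p -> L) =>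
     epsilon inh (fun z => (forall q (H : ltP q p), lt (h q H) z) /\
        forall z', (forall q (H : ltP q p), lt (h q H) z') -> ~ lt z' z)).
  set (g := Fix wfP (fun _ => L) F).
  assert (Heq : forall p, g p = F p (fun q _ => g q)).
  { intros p. unfold g. apply (Fix_eq wfP (fun _ => L) F). intros x f f' Hff.
    assert (f = f') as ->; [|reflexivity].
    apply functional_extensionality_dep; intros y. apply functional_extensionality_dep; intros Hy. auto. }
  assert (Hspec : forall p, (forall q, ltP q p -> lt (g q) (g p)) /\
             (forall z', (forall q, ltP q p -> lt (g q) z') -> ~ lt z' (g p))).
  { intros p. rewrite Heq. unfold F.
    apply (epsilon_spec inh (fun z => (forall q (H : ltP q p), lt (g q) z) /\
        forall z', (forall q (H : ltP q p), lt (g q) z') -> ~ lt z' z)).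
    destruct (small_bounded L lt HU {q | ltP q p} (fun s => g (proj1_sig s)) (smP p)) as [b Hb].
    destruct (least L lt HU (fun z => forall q, ltP q p -> lt (g q) z)) as [z [Hz Hmin]].
    - exists b. intros q Hq. exact (Hb (exist _ q Hq)).
    - exists z. split; auto. }
  exists g. split.
  - intros p q H. apply (proj1 (Hspec q)); auto.
  - intros p. induction (wfP p) as [p _ IH]. intros z Hz.
    destruct (classic (forall q, ltP q p -> lt (g q) z)) as [Hall|Hn].
    + exfalso. exact (proj2 (Hspec p) z Hall Hz).
    + apply not_all_ex_not in Hn. destruct Hn as [q Hq].
      apply imply_to_and in Hq. destruct Hq as [Hqp Hnl].
      destruct (not_lt_le L lt HU _ _ Hnl) as [H1|H1].
      * destruct (IH q Hqp z H1) as [q' [Hq' E]]. exists q'. split; eauto.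
      * exists q. auto.
Qed.

Definition Seg {L} (lt : L -> L -> Prop) (a : L) := {x : L | lt x a}.

Definition lex3 {L} (lt : L -> L -> Prop) (p q : L * L * L) : Prop :=
  let '(a1, b1, c1) := p in let '(a2, b2, c2) := q in
  lt a1 a2 \/ (a1 = a2 /\ (lt b1 b2 \/ (b1 = b2 /\ lt c1 c2))).

Lemma lex3_wf L lt (HU : uncountable_regular_cardinal L lt) : well_founded (lex3 lt).
Proof.
  intros [[a b] c]. revert b c.
  induction (urc_wf L lt HU a) as [a _ IHa]. intros b.
  induction (urc_wf L lt HU b) as [b _ IHb]. intros c.
  induction (urc_wf L lt HU c) as [c _ IHc].
  constructor. intros [[a' b'] c'] H. simpl in H.
  destruct H as [H|[-> [H|[-> H]]]]; auto.
Qed.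

Lemma lex3_trans L lt (HU : uncountable_regular_cardinal L lt) p q r :
  lex3 lt p q -> lex3 lt q r -> lex3 lt p r.
Proof.
  pose proof (urc_trans L lt HU) as T.
  destruct p as [[a1 b1] c1], q as [[a2 b2] c2], r as [[a3 b3] c3]; simpl.
  intros [H|[-> [H|[-> H]]]] [H'|[-> [H'|[-> H']]]]; eauto 8.
Qed.

Lemma lex3_total L lt (HU : uncountable_regular_cardinal L lt) p q :
  p = q \/ lex3 lt p q \/ lex3 lt q p.
Proof.
  pose proof (urc_total L lt HU) as T.
  destruct p as [[a1 b1] c1], q as [[a2 b2] c2]; simpl.
  destruct (T a1 a2) as [->|[H|H]]; [|tauto|tauto].
  destruct (T b1 b2) as [->|[H|H]]; [|tauto|tauto].
  destruct (T c1 c2) as [->|[H|H]]; tauto.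
Qed.

Definition mx {L} (lt : L -> L -> Prop) (x y : L) : L :=
  if excluded_middle_informative (lt x y) then y else x.

Lemma mx_ge1 L lt (HU : uncountable_regular_cardinal L lt) x y : lt x (mx lt x y) \/ x = mx lt x y.
Proof. unfold mx. destruct (excluded_middle_informative (lt x y)); auto. Qed.

Lemma mx_ge2 L lt (HU : uncountable_regular_cardinal L lt) x y : lt y (mx lt x y) \/ y = mx lt x y.
Proof. unfold mx. destruct (excluded_middle_informative (lt x y)); auto.
  destruct (not_lt_le L lt HU _ _ n); auto. Qed.

Definition opt_m {L} (lt : L -> L -> Prop) (m u : L) : option (Seg lt m) :=
  match excluded_middle_informative (lt u m) with
  | left H => Some (exist _ u H) | right _ => None end.

Lemma opt_m_inj L lt (HU : uncountable_regular_cardinal L lt) m u u' :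
  (lt u m \/ u = m) -> (lt u' m \/ u' = m) -> opt_m lt m u = opt_m lt m u' -> u = u'.
Proof.
  unfold opt_m. intros H1 H2.
  destruct (excluded_middle_informative (lt u m)), (excluded_middle_informative (lt u' m));
  intros E; try discriminate.
  - inversion E; auto.
  - destruct H1; destruct H2; try contradiction; congruence.
Qed.

Lemma hess L lt (HU : uncountable_regular_cardinal L lt) :
  forall a, ~ Fin (Seg lt a) -> inj_le (Seg lt a * Seg lt a) (Seg lt a).
Proof.
  pose proof (urc_trans L lt HU) as T.
  intros a. induction (urc_wf L lt HU a) as [a _ IH]. intros Hinf.
  destruct (classic (exists a', lt a' a /\ inj_le (Seg lt a) (Seg lt a'))) as [[a' [Ha' Hinj]]|Hcard].
  - assert (Hinf' : ~ Fin (Seg lt a')) by (intro HF; apply Hinf; eapply fin_inj; eauto).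
    eapply inj_trans; [apply inj_prod; exact Hinj|].
    eapply inj_trans; [apply (IH a' Ha' Hinf')|].
    exists (fun x : Seg lt a' => exist (fun x => lt x a) (proj1_sig x) (T _ _ _ (proj2_sig x) Ha')).
    intros x y E. apply sig_ext. apply (f_equal (@proj1_sig _ _)) in E. exact E.
  - set (P := (Seg lt a * Seg lt a)%type).
    set (key := fun p : P => (mx lt (proj1_sig (fst p)) (proj1_sig (snd p)), proj1_sig (fst p), proj1_sig (snd p))).
    set (G := fun p q : P => lex3 lt (key p) (key q)).
    assert (key_inj : forall p q, key p = key q -> p = q).
    { intros [x y] [x' y'] E. unfold key in E; simpl in E. inversion E. f_equal; apply sig_ext; auto. }
    assert (Hsmall : forall m, lt m a -> forall X, ~ Fin X ->
               inj_le X (option (Seg lt m) * option (Seg lt m)) -> inj_le X (Seg lt m)).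
    { intros m Hm X HX Hi. destruct (classic (Fin (Seg lt m))) as [HF|HnF].
      - exfalso. apply HX. eapply fin_inj; [exact Hi|]. apply fin_prod; apply fin_option; auto.
      - eapply inj_trans; [exact Hi|]. eapply inj_trans; [apply inj_prod; apply hotel; auto|].
        apply IH; auto. }
    assert (Hpred : forall p : P, inj_le {q | G q p} (option (Seg lt (mx lt (proj1_sig (fst p)) (proj1_sig (snd p)))) * option (Seg lt (mx lt (proj1_sig (fst p)) (proj1_sig (snd p)))))).
    { intros p. set (m := mx lt (proj1_sig (fst p)) (proj1_sig (snd p))).
      exists (fun q => (opt_m lt m (proj1_sig (fst (proj1_sig q))), opt_m lt m (proj1_sig (snd (proj1_sig q))))).
      assert (Hle : forall q : P, G q p -> (lt (proj1_sig (fst q)) m \/ proj1_sig (fst q) = m) /\ (lt (proj1_sig (snd q)) m \/ proj1_sig (snd q) = m)).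
      { intros q Hq. unfold G, key, lex3 in Hq.
        assert (Hmm : lt (mx lt (proj1_sig (fst q)) (proj1_sig (snd q))) m \/ mx lt (proj1_sig (fst q)) (proj1_sig (snd q)) = m).
        { destruct Hq as [H|[H _]]; auto. }
        split.
        - destruct (mx_ge1 L lt HU (proj1_sig (fst q)) (proj1_sig (snd q))) as [H|H].
          + left. eapply lt_le_trans; eauto.
          + rewrite H; auto.
        - destruct (mx_ge2 L lt HU (proj1_sig (fst q)) (proj1_sig (snd q))) as [H|H].
          + left. eapply lt_le_trans; eauto.
          + rewrite H; auto. }
      intros [q Hq] [q' Hq'] E. simpl in E. injection E as E1 E2.
      apply sig_ext; simpl. apply key_inj. unfold key.
      destruct (Hle q Hq) as [A1 A2], (Hle q' Hq') as [B1 B2].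
      pose proof (opt_m_inj L lt HU m _ _ A1 B1 E1) as F1.
      pose proof (opt_m_inj L lt HU m _ _ A2 B2 E2) as F2.
      rewrite F1, F2. reflexivity. }
    assert (Hm_lt : forall p : P, lt (mx lt (proj1_sig (fst p)) (proj1_sig (snd p))) a).
    { intros [[x Hx] [y Hy]]. simpl. unfold mx. destruct (excluded_middle_informative (lt x y)); auto. }
    destruct (collapse L lt HU P G) as [g [Hg1 Hg2]].
    + apply (wf_inverse_image P (L*L*L) (lex3 lt) key). apply lex3_wf; auto.
    + intros p q r. apply lex3_trans; auto.
    + intros p Hi. pose proof (Hm_lt p) as Hm.
      apply (urc_initial L lt HU (mx lt (proj1_sig (fst p)) (proj1_sig (snd p)))).
      apply Hsmall; auto. apply (L_notfin L lt HU). eapply inj_trans; eauto.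
    + assert (Hga : forall p, lt (g p) a).
      { intros p. apply NNPP; intros Hn. apply not_lt_le in Hn; auto.
        pose proof (Hm_lt p) as Hm.
        apply Hcard. eexists; split; [exact Hm|]. apply Hsmall; auto.
        eapply inj_trans; [|apply Hpred].
        assert (Hz : forall z : Seg lt a, exists q, G q p /\ g q = proj1_sig z).
        { intros [z Hz]. simpl. apply Hg2. destruct Hn as [Hn|Hn]; [eapply T; eauto|rewrite <- Hn; auto]. }
        exists (fun z => exist (fun q => G q p) (proj1_sig (constructive_indefinite_description _ (Hz z)))
                          (proj1 (proj2_sig (constructive_indefinite_description _ (Hz z))))).
        intros z z' E. apply (f_equal (@proj1_sig _ _)) in E. simpl in E.
        destruct (constructive_indefinite_description _ (Hz z)) as [q [Gq Eq]].
        destruct (constructive_indefinite_description _ (Hz z')) as [q' [Gq' Eq']]. simpl in E. subst q'.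
        apply sig_ext. congruence. }
      exists (fun p => exist (fun x => lt x a) (g p) (Hga p)).
      intros p q E. apply (f_equal (@proj1_sig _ _)) in E. simpl in E.
      apply key_inj. destruct (lex3_total L lt HU (key p) (key q)) as [H|[H|H]]; auto;
      apply Hg1 in H; rewrite E in H; exfalso; eapply lt_irrefl; eauto.
Qed.

Lemma hess_type L lt (HU : uncountable_regular_cardinal L lt) W :
  inj_le W L -> ~ inj_le L W -> ~ Fin W -> inj_le (W * W) W.
Proof.
  pose proof (urc_trans L lt HU) as T.
  intros [f Hf] HLW HW.
  destruct (collapse L lt HU W (fun x y => lt (f x) (f y))) as [g [Hg1 Hg2]].
  - apply (wf_inverse_image W L lt f). apply (urc_wf L lt HU).
  - intros p q r; apply T.
  - intros p Hi. apply (urc_initial L lt HU (f p)). eapply inj_trans; [exact Hi|].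
    exists (fun q : {q | lt (f q) (f p)} => exist (fun x => lt x (f p)) (f (proj1_sig q)) (proj2_sig q)).
    intros x y E. apply (f_equal (@proj1_sig _ _)) in E. simpl in E. apply sig_ext. auto.
  - assert (ginj : forall x y, g x = g y -> x = y).
    { intros x y E. destruct (urc_total L lt HU (f x) (f y)) as [H|[H|H]]; auto;
      apply Hg1 in H; rewrite E in H; exfalso; eapply lt_irrefl; eauto. }
    destruct (small_bounded L lt HU W g HLW) as [b Hb].
    destruct (least L lt HU (fun c => forall w, lt (g w) c)) as [c [Hc Hcmin]]; [eauto|].
    assert (H1 : inj_le W (Seg lt c)).
    { exists (fun w => exist (fun x => lt x c) (g w) (Hc w)). intros x y E.
      apply (f_equal (@proj1_sig _ _)) in E. auto. }
    assert (Hz : forall z : Seg lt c, exists w, g w = proj1_sig z).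
    { intros [z Hzc]. simpl. destruct (classic (forall w, lt (g w) z)) as [Hall|Hn].
      - exfalso. exact (Hcmin z Hall Hzc).
      - apply not_all_ex_not in Hn. destruct Hn as [w Hw]. apply not_lt_le in Hw; auto.
        destruct Hw as [Hw|Hw]; eauto. destruct (Hg2 w z Hw) as [q [_ Hq]]; eauto. }
    assert (H2 : inj_le (Seg lt c) W).
    { exists (fun z => proj1_sig (constructive_indefinite_description _ (Hz z))).
      intros z z' E.
      destruct (constructive_indefinite_description _ (Hz z)) as [w Ew].
      destruct (constructive_indefinite_description _ (Hz z')) as [w' Ew']. simpl in E. subst w'.
      apply sig_ext. congruence. }
    assert (Hc_inf : ~ Fin (Seg lt c)) by (intro HF; apply HW; eapply fin_inj; eauto).
    eapply inj_trans; [apply inj_prod; exact H1|].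
    eapply inj_trans; [apply (hess L lt HU c Hc_inf)|]. exact H2.
Qed.

Lemma list_bound L lt (HU : uncountable_regular_cardinal L lt) (T X : Type) (val : X -> L)
  (lT : list T) (P : T -> X -> Prop) (b0 : L) :
  (forall t, In t lT -> exists b, forall x, P t x -> ~ lt b (val x)) ->
  exists b, forall t, In t lT -> forall x, P t x -> ~ lt b (val x).
Proof.
  induction lT as [|t lT IH]; intros H.
  - exists b0. intros t [].
  - destruct IH as [b Hb]. { intros t' Ht'. apply H. simpl; auto. }
    destruct (H t (or_introl eq_refl)) as [bt Hbt].
    destruct (max2 L lt HU b bt) as [b' [H1 H2]].
    exists b'. intros t' [E|Ht'] x Hx Hlt.
    + subst t'. apply (Hbt x Hx). eapply le_lt_trans; eauto.
    + apply (Hb t' Ht' x Hx). eapply le_lt_trans; eauto.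
Qed.

Lemma list_max L lt (HU : uncountable_regular_cardinal L lt) (X : Type) (val : X -> L) (x0 : X) (l : list X) :
  exists m, In m (x0 :: l) /\ forall x, In x (x0 :: l) -> lt (val x) (val m) \/ val x = val m.
Proof.
  induction l as [|x l IH].
  - exists x0. split; simpl; auto. intros x [->|[]]; auto.
  - destruct IH as [m [Hm Hall]].
    destruct (urc_total L lt HU (val x) (val m)) as [E|[H|H]].
    + exists m. split. { destruct Hm; simpl; auto. }
      intros y [->|[->|Hy]]; [apply Hall; simpl; auto|tauto|apply Hall; simpl; auto].
    + exists m. split. { destruct Hm; simpl; auto. }
      intros y [->|[->|Hy]]; [apply Hall; simpl; auto|tauto|apply Hall; simpl; auto].
    + exists x. split. { simpl; auto. }
      intros y [->|[->|Hy]]; auto.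
      * destruct (Hall y (or_introl eq_refl)) as [H'|H']; left; [eapply (urc_trans _ _ HU); eauto|congruence].
      * destruct (Hall y (or_intror Hy)) as [H'|H']; left; [eapply (urc_trans _ _ HU); eauto|congruence].
Qed.

Lemma fin_branch L lt I K Rs (HU : uncountable_regular_cardinal L lt)
  (HS : lambda_system L lt I K Rs) :
  Fin K -> Fin {R | Rs R} -> has_cofinal_branch L lt I K Rs.
Proof.
  pose proof (urc_trans L lt HU) as Tr.
  intros [lK HlK] [lR HlR].
  destruct HS as [[k0] [_ [[r0] [_ [HI [HRs Hconn]]]]]].
  set (Ia := {a : L | I a}).
  set (T := (K * {R | Rs R} * K)%type).
  assert (inhT : inhabited T) by (constructor; exact (k0, r0, k0)).
  set (lT := list_prod (list_prod lK lR) lK).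
  assert (HlT : forall t : T, In t lT).
  { intros [[a b] c]. apply in_prod; [apply in_prod|]; auto. }
  set (S := fun (al : Ia) (t : T) (g : Ia) => proj1_sig (snd (fst t)) (al, fst (fst t)) (g, snd t)).
  set (Unb := fun (U : Ia -> Prop) => forall b : L, exists g, U g /\ lt b (proj1_sig g)).
  set (ltI := fun al be : Ia => lt (proj1_sig al) (proj1_sig be)).
  assert (wfI : well_founded ltI) by (apply (wf_inverse_image Ia L lt); apply (urc_wf L lt HU)).
  assert (HIu : forall b : L, exists g : Ia, lt b (proj1_sig g)).
  { intros b. destruct (no_max L lt HU b) as [c Hc]. destruct (HI c) as [g [Hg Hgc]].
    exists (exist _ g Hg). simpl. apply not_lt_le in Hgc; auto. eapply lt_le_trans; eauto.
    }
  set (F := fun (al : Ia) (h : forall be, ltI be al -> T) =>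
     epsilon inhT (fun t => forall l : list Ia, forall Hl : (forall be, In be l -> ltI be al),
        Unb (fun g => S al t g /\ forall be (Hbe : In be l), S be (h be (Hl be Hbe)) g))).
  set (tt := Fix wfI (fun _ => T) F).
  assert (Heq : forall al, tt al = F al (fun be _ => tt be)).
  { intros al. unfold tt. apply (Fix_eq wfI (fun _ => T) F). intros x f f' Hff.
    assert (f = f') as ->; [|reflexivity].
    apply functional_extensionality_dep; intros y. apply functional_extensionality_dep; intros Hy. auto. }
  set (Q := fun al t => forall l : list Ia, (forall be, In be l -> ltI be al) ->
        Unb (fun g => S al t g /\ forall be, In be l -> S be (tt be) g)).
  assert (Hspec : forall al, (exists t, Q al t) -> Q al (tt al)).
  { intros al H. rewrite Heq. exact (epsilon_spec inhT (Q al) H). }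
  assert (Claim : forall al l, (forall be, In be l -> ltI be al \/ be = al) ->
                  Unb (fun g => forall be, In be l -> S be (tt be) g)).
  { intros al. induction (wfI al) as [al _ IH].
    assert (Prev : forall l, (forall be, In be l -> ltI be al) -> Unb (fun g => forall be, In be l -> S be (tt be) g)).
    { intros [|be0 l] Hl.
      - intros b. destruct (HIu b) as [g Hg]. exists g. split; auto. intros be [].
      - destruct (list_max L lt HU Ia (@proj1_sig _ _) be0 l) as [m [Hm Hmax]].
        apply (IH m (Hl m Hm)). intros be Hbe. destruct (Hmax be Hbe) as [H|H]; [left; exact H|right; apply sig_ext; exact H]. }
    assert (Hex : exists t, Q al t).
    { apply NNPP; intros Hn.
      assert (Hbad : forall t, exists l, (forall be, In be l -> ltI be al) /\ exists b, forall g,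
                S al t g -> (forall be, In be l -> S be (tt be) g) -> ~ lt b (proj1_sig g)).
      { intros t. apply NNPP; intros Hn2. apply Hn. exists t. intros l Hl b. apply NNPP; intros Hn3.
        apply Hn2. exists l. split; auto. exists b. intros g H1 H2 H3. apply Hn3. exists g; auto. }
      assert (Hcomb : forall lT', exists Lst, (forall be, In be Lst -> ltI be al) /\ exists b,
                forall t, In t lT' -> forall g, S al t g -> (forall be, In be Lst -> S be (tt be) g) -> ~ lt b (proj1_sig g)).
      { induction lT' as [|t lT' IHl].
        - exists nil. split. { intros be []. } exists (proj1_sig al). intros t [].
        - destruct IHl as [Lst [HLst [b Hb]]]. destruct (Hbad t) as [lt' [Hlt' [bt Hbt]]].
          destruct (max2 L lt HU b bt) as [b' [H1 H2]].
          exists (lt' ++ Lst). split.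
          { intros be Hbe. apply in_app_or in Hbe. destruct Hbe; auto. }
          exists b'. intros t' [E|Ht'] g HS Hall Hlt.
          + subst t'. apply (Hbt g HS). { intros be Hbe. apply Hall. apply in_or_app; auto. }
            eapply le_lt_trans; eauto.
          + apply (Hb t' Ht' g HS). { intros be Hbe. apply Hall. apply in_or_app; auto. }
            eapply le_lt_trans; eauto. }
      destruct (Hcomb lT) as [Lst [HLst [b Hb]]].
      destruct (max2 L lt HU b (proj1_sig al)) as [b'' [H1 H2]].
      destruct (Prev Lst HLst b'') as [g [Hg Hlt]].
      assert (Hag : lt (proj1_sig al) (proj1_sig g)) by (eapply le_lt_trans; eauto).
      destruct (Hconn al g Hag) as [b0 [b1 [R [HR HRel]]]].
      apply (Hb (b0, exist _ R HR, b1) (HlT _) g HRel Hg). eapply le_lt_trans; eauto. }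
    pose proof (Hspec al Hex) as Hq.
    intros l Hl.
    set (l' := filter (fun be => if excluded_middle_informative (be = al) then false else true) l).
    assert (Hl' : forall be, In be l' -> ltI be al).
    { intros be Hbe. apply filter_In in Hbe. destruct Hbe as [Hin Hne].
      destruct (excluded_middle_informative (be = al)); [discriminate|].
      destruct (Hl be Hin); auto. contradiction. }
    intros b. destruct (Hq l' Hl' b) as [g [[Hg1 Hg2] Hlt]]. exists g. split; auto.
    intros be Hbe. destruct (classic (be = al)) as [->|Hne]; auto.
    apply Hg2. apply filter_In. split; auto.
    destruct (excluded_middle_informative (be = al)); auto. }
  (* pigeonhole *)
  assert (Hpig : exists t, Unb (fun al => tt al = t)).
  { apply NNPP; intros Hn.
    destruct (L_inh L lt HU) as [x0].
    assert (Hb0 : forall t, In t lT -> exists b, forall al, tt al = t -> ~ lt b (proj1_sig al)).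
    { intros t _. apply NNPP; intros Hn2. apply Hn. exists t. intros b. apply NNPP; intros Hn3.
      apply Hn2. exists b. intros al E Hlt. apply Hn3. exists al; auto. }
    destruct (list_bound L lt HU T Ia (fun al => proj1_sig al) lT (fun t al => tt al = t) x0 Hb0) as [b Hb].
    destruct (HIu b) as [al Hal]. exact (Hb (tt al) (HlT _) al eq_refl Hal). }
  destruct Hpig as [[[k r] j] Hunb].
  exists (proj1_sig r). split; [exact (proj2_sig r)|].
  exists (fun p : node L I K => tt (fst p) = (k, r, j) /\ snd p = k).
  split.
  - intros [al ka] [be kb] [Ha Hka] [Hb Hkb]; simpl in *. subst ka kb.
    assert (Hcmp : forall x y, tt x = (k,r,j) -> tt y = (k,r,j) -> ltI x y ->
       (x,k) = (y,k) \/ proj1_sig r (x,k) (y,k) \/ proj1_sig r (y,k) (x,k)).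
    { intros x y Hx Hy Hxy.
      assert (Hl : forall be, In be (x :: y :: nil) -> ltI be y \/ be = y).
      { intros z [<-|[<-|[]]]; auto. }
      destruct (Claim y (x :: y :: nil) Hl (proj1_sig x)) as [g [Hg _]].
      pose proof (Hg x (or_introl eq_refl)) as G1. pose proof (Hg y (or_intror (or_introl eq_refl))) as G2.
      unfold S in G1, G2. rewrite Hx in G1. rewrite Hy in G2. simpl in G1, G2.
      destruct (HRs _ (proj2_sig r)) as [_ [Htl _]]. exact (Htl _ _ _ G1 G2). }
    destruct (urc_total L lt HU (proj1_sig al) (proj1_sig be)) as [E|[H|H]].
    + left. f_equal. apply sig_ext; auto.
    + apply Hcmp; auto.
    + destruct (Hcmp be al Hb Ha H) as [E|[E|E]]; auto.
  - intros a. destruct (Hunb a) as [al [Hal Hlt]]. exists (al, k). split; [split; auto|].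
    unfold level; simpl. apply (lt_asym L lt HU a _ Hlt).
Qed.

Lemma construct L lt I K Rs K' (HU : uncountable_regular_cardinal L lt)
  (HS : lambda_system L lt I K Rs) (Hnb : ~ has_cofinal_branch L lt I K Rs)
  (e : K * {R | Rs R} -> K') (He : forall x y, e x = e y -> x = y)
  (HK'L : inj_le K' L) (HLK' : ~ inj_le L K') (HKK' : inj_le K K') :
  exists Rs' : (node L I K' -> node L I K' -> Prop) -> Prop,
    lambda_system L lt I K' Rs' /\
    ~ has_cofinal_branch L lt I K' Rs' /\
    (exists R0, forall R, Rs' R <-> R = R0).
Proof.
  destruct HS as [[k0] [_ [[r00] [_ [HI [HRs Hconn]]]]]].
  set (R0 := fun p q : node L I K' => exists k1 k2 (r : {R | Rs R}),
        snd p = e (k1, r) /\ snd q = e (k2, r) /\ proj1_sig r (fst p, k1) (fst q, k2)).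
  exists (fun R => R = R0). split; [|split].
  - split; [|split; [|split; [|split; [|split; [|split]]]]].
    + destruct HKK' as [f _]. constructor. exact (f k0).
    + split; auto.
    + constructor. exists R0. reflexivity.
    + destruct (L_inh L lt HU) as [x0]. split.
      * exists (fun _ => x0). intros [x Hx] [y Hy] _. apply sig_ext. simpl. congruence.
      * intros [f Hf]. apply (urc_uncountable L lt HU). exists (fun _ => 0). intros x y _. apply Hf.
        destruct (f x) as [u Hu], (f y) as [v Hv]. apply sig_ext; simpl; congruence.
    + exact HI.
    + intros R ->. split; [|split].
      * intros p q s [k1 [k2 [r [H1 [H2 H3]]]]] [k2' [k3 [r' [H1' [H2' H3']]]]].
        rewrite H2 in H1'. apply He in H1'. injection H1' as <- <-.
        exists k1, k3, r. split; auto. split; auto.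
        destruct (HRs _ (proj2_sig r)) as [Htr _]. eapply Htr; eauto.
      * intros [a sa] [b sb] c [k1 [k3 [r [H1 [H2 H3]]]]] [k2 [k3' [r' [H1' [H2' H3']]]]].
        simpl in *. rewrite H2 in H2'. apply He in H2'. injection H2' as <- <-.
        destruct (HRs _ (proj2_sig r)) as [_ [Htl _]].
        destruct (Htl _ _ _ H3 H3') as [E|[E|E]].
        -- left. injection E as -> ->. congruence.
        -- right; left. exists k1, k2, r. simpl. auto.
        -- right; right. exists k2, k1, r. simpl. auto.
      * intros p q [k1 [k2 [r [H1 [H2 H3]]]]].
        destruct (HRs _ (proj2_sig r)) as [_ [_ Hlv]]. exact (Hlv _ _ H3).
    + intros a0 a1 Hlt. destruct (Hconn a0 a1 Hlt) as [b0 [b1 [R [HR HRel]]]].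
      exists (e (b0, exist _ R HR)), (e (b1, exist _ R HR)), R0. split; auto.
      exists b0, b1, (exist _ R HR). simpl. auto.
  - intros [R [HR0 [B [Hcomp Hcof]]]]. subst R.
    assert (Dec : forall p, B p -> exists k r, snd p = e (k, r)).
    { intros p Hp. destruct (no_max L lt HU (level p)) as [c Hc].
      destruct (Hcof c) as [q [Hq Hqc]].
      destruct (Hcomp p q Hp Hq) as [E|[[k1 [k2 [r [H1 _]]]]|[k1 [k2 [r [_ [H2 _]]]]]]]; eauto.
      subst q. contradiction. }
    assert (Uniq : forall p q k r k' r', B p -> B q -> snd p = e (k, r) -> snd q = e (k', r') -> r = r').
    { intros p q k r k' r' Hp Hq E1 E2.
      destruct (Hcomp p q Hp Hq) as [E|[[k1 [k2 [r'' [H1 [H2 _]]]]]|[k1 [k2 [r'' [H1 [H2 _]]]]]]].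
      - subst q. rewrite E1 in E2. apply He in E2. congruence.
      - rewrite E1 in H1. rewrite E2 in H2. apply He in H1. apply He in H2. congruence.
      - rewrite E1 in H2. rewrite E2 in H1. apply He in H1. apply He in H2. congruence. }
    destruct (L_inh L lt HU) as [x0].
    destruct (Hcof x0) as [p0 [Hp0 _]]. destruct (Dec p0 Hp0) as [kk [r0 Hr0]].
    apply Hnb. exists (proj1_sig r0). split; [exact (proj2_sig r0)|].
    exists (fun x : node L I K => B (fst x, e (snd x, r0))). split.
    + intros [al k] [be k'] Hx Hy. simpl in *.
      destruct (Hcomp _ _ Hx Hy) as [E|[[k1 [k2 [r [H1 [H2 H3]]]]]|[k1 [k2 [r [H1 [H2 H3]]]]]]]; simpl in *.
      * left. injection E as -> E. apply He in E. congruence.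
      * apply He in H1. apply He in H2. injection H1; injection H2; intros; subst; auto.
      * apply He in H1. apply He in H2. injection H1; injection H2; intros; subst; auto.
    + intros a. destruct (Hcof a) as [p [Hp Hpa]]. destruct (Dec p Hp) as [k [r Hr]].
      pose proof (Uniq p p0 k r kk r0 Hp Hp0 Hr Hr0) as ->.
      exists (fst p, k). simpl. split; auto. rewrite <- Hr. destruct p; exact Hp.
  - exists R0. intros R; tauto.
Qed.

Theorem mainTheorem14
  (L : Type) (lt : L -> L -> Prop) (I : L -> Prop) (K : Type)
  (Rs : (node L I K -> node L I K -> Prop) -> Prop) (K' : Type) :
  uncountable_regular_cardinal L lt ->
  lambda_system L lt I K Rs ->
  ~ has_cofinal_branch L lt I K Rs ->
  card_is_max K' K {R | Rs R} ->
  exists Rs' : (node L I K' -> node L I K' -> Prop) -> Prop,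
    lambda_system L lt I K' Rs' /\
    ~ has_cofinal_branch L lt I K' Rs' /\
    (exists R0, forall R, Rs' R <-> R = R0).
Proof.
  intros HU HS Hnb [HKK' [HRK' Hor]].
  pose proof HS as HS'.
  destruct HS' as [_ [[HKL HLK] [_ [[HRL HLR] _]]]].
  assert (HK'L : inj_le K' L) by (destruct Hor; eapply inj_trans; eauto).
  assert (HLK' : ~ inj_le L K').
  { intros H. destruct Hor as [H'|H']; [apply HLK|apply HLR]; eapply inj_trans; eauto. }
  destruct (classic (Fin K')) as [HF|HnF].
  - exfalso. apply Hnb. apply (fin_branch L lt I K Rs HU HS); [apply (fin_inj K K')|apply (fin_inj _ K')]; auto.
  - assert (Hp : inj_le (K * {R | Rs R}) K').
    { apply (inj_trans _ (K' * K')); [apply inj_prod; assumption|]. apply (hess_type L lt HU); auto. }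
    destruct Hp as [e He]. eapply construct; eauto.
Qed.
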